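(* Let $D$ be a link diagram and $\mathcal{R}$ a set of regions of $D$. If the cardinality of $\mathcal{R}$ is even, then region freeze crossing changes about $\mathcal{R}$ and region crossing changes about $\mathcal{R}$ have the same effect on $D$ (produce the same diagram). If the cardinality of $\mathcal{R}$ is odd, then the diagram obtained from $D$ by region freeze crossing changes about $\mathcal{R}$ is the mirror image of the diagram obtained from $D$ by region crossing changes about $\mathcal{R}$.
   Context: A link diagram is a regular projection of a link into the plane with over/under information at each crossing. Regions are the connected components of the complement of the projection in the plane; a crossing touches a region $R$ if it lies on the boundary of $R$. A region crossing change at $R$ changes every crossing touching $R$ (each once). A region freeze crossing change at $R$ changes every crossing of the diagram that does not touch $R$, and leaves the crossings touching $R$ unchanged. For a set $\mathcal{R}$ of mutually distinct regions, region (freeze) crossing changes about $\mathcal{R}$ means applying the region (freeze) crossing change at each region of $\mathcal{R}$ once, in any order. The mirror image of a diagram here means the diagram with the same projection and every crossing changed. *)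

(* Defs.v *)
From mathcomp Require Import all_boot.
Set Implicit Arguments. Unset Strict Implicit. Unset Printing Implicit Defensive.

(* A link diagram with crossings of type C and regions of type Rg:
   - [touches c R] : crossing c lies on the boundary of region R
     (this is determined by the underlying projection);
   - [over c] : the over/under information at crossing c (which strand
     is over, encoded as a boolean). *)
Record diagram (C Rg : finType) := Diagram {
  touches : C -> Rg -> bool;
  over : {ffun C -> bool}
}.

Section Ops.
Variables (C Rg : finType).

Definition change_crossings (P : C -> bool) (D : diagram C Rg) : diagram C Rg :=
  Diagram (touches D) [ffun c => if P c then ~~ over D c else over D c].

Definition rcc (R : Rg) (D : diagram C Rg) : diagram C Rg :=
  change_crossings (fun c => touches D c R) D.

Definition rfcc (R : Rg) (D : diagram C Rg) : diagram C Rg :=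
  change_crossings (fun c => ~~ touches D c R) D.

Definition rcc_about (rs : seq Rg) (D : diagram C Rg) : diagram C Rg :=
  foldr rcc D rs.
Definition rfcc_about (rs : seq Rg) (D : diagram C Rg) : diagram C Rg :=
  foldr rfcc D rs.

Definition mirror (D : diagram C Rg) : diagram C Rg :=
  change_crossings (fun _ => true) D.
End Ops.

(* Main.v *)
Require Import Defs.
From mathcomp Require Import all_boot.

Lemma touches_rcc (C Rg : finType) (D : diagram C Rg) rs :
  touches (rcc_about rs D) = touches D.
Proof. by elim: rs => //= r rs IH; rewrite /rcc /change_crossings /= IH. Qed.

Lemma touches_rfcc (C Rg : finType) (D : diagram C Rg) rs :
  touches (rfcc_about rs D) = touches D.
Proof. by elim: rs => //= r rs IH; rewrite /rfcc /change_crossings /= IH. Qed.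

Lemma over_rcc (C Rg : finType) (D : diagram C Rg) rs c :
  Defs.over (rcc_about rs D) c = Defs.over D c (+) odd (count (touches D c) rs).
Proof.
elim: rs => /= [|r rs IH]; first by rewrite addbF.
rewrite /rcc /change_crossings /= ffunE IH touches_rcc oddD.
by case: (touches D c r); case: (Defs.over D c); case: (odd _).
Qed.

Lemma over_rfcc (C Rg : finType) (D : diagram C Rg) rs c :
  Defs.over (rfcc_about rs D) c = Defs.over D c (+) odd (count (predC (touches D c)) rs).
Proof.
elim: rs => /= [|r rs IH]; first by rewrite addbF.
rewrite /rfcc /change_crossings /= ffunE IH touches_rfcc oddD.
by case: (touches D c r); case: (Defs.over D c); case: (odd _).
Qed.

Lemma diag_eq (C Rg : finType) (D1 D2 : diagram C Rg) :
  touches D1 = touches D2 -> Defs.over D1 =1 Defs.over D2 -> D1 = D2.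
Proof.
case: D1 D2 => t1 o1 [t2 o2] /= -> H.
by rewrite (ffunP o1 o2).1.
Qed.

Theorem lemma3p1 (C Rg : finType) (D : diagram C Rg) (rs : seq Rg) :
  uniq rs ->
  (~~ odd (size rs) -> rfcc_about rs D = rcc_about rs D) /\
  (odd (size rs) -> rfcc_about rs D = mirror (rcc_about rs D)).
Proof.
move=> _.
have key c : odd (count (predC (touches D c)) rs) =
             odd (size rs) (+) odd (count (touches D c) rs).
  rewrite -(count_predC (touches D c) rs) oddD.
  by case: (odd (count (touches D c) rs)); case: (odd (count (predC (touches D c)) rs)).
split=> Hs.
  apply: diag_eq; first by rewrite touches_rfcc touches_rcc.
  by move=> c; rewrite over_rfcc over_rcc key (negbTE Hs).
apply: diag_eq; first by rewrite touches_rfcc /mirror /change_crossings /= touches_rcc.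
move=> c; rewrite /mirror /change_crossings /= ffunE over_rfcc over_rcc key Hs.
by case: (Defs.over D c); case: (odd _).
Qed.
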